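(* Let $\mathsf{T}$ be a rooted plane tree and $\delta\in\mathcal{O}(\mathsf{T})$. For all $v\in\mathsf{T}$, we have $\mathsf{Pop}(\delta)(v)\subseteq\delta(v)$. Moreover, for each child $u$ of $v$ with $u\in\delta(v)$, we have $|\Delta_{\mathsf{Pop}(\delta)(v)}(u)|\leq|\Delta_{\delta(v)}(u)|-1$.
   Context: A rooted plane tree $\mathsf{T}$ is a finite tree with a distinguished root, regarded as a poset $\leq_\mathsf{T}$ in which $v'\leq_\mathsf{T} v$ iff $v$ lies on the path from $v'$ to the root; the children of $v$ are the nodes covered by $v$. An ornament is a nonempty set of nodes inducing a connected subgraph. For a set $S$ of nodes and a node $u$, $\Delta_S(u)=\{w\in S:w\leq_\mathsf{T} u\}$ (empty if no such $w$). An ornamentation is a map $\delta$ from $\mathsf{T}$ to ornaments such that the unique maximal element of $\delta(v)$ is $v$ and any two sets $\delta(v),\delta(v')$ are nested or disjoint. $\mathcal{O}(\mathsf{T})$ is the set of ornamentations ordered by $\delta\leq\delta'$ iff $\delta(v)\subseteq\delta'(v)$ for all $v$; it is a lattice with meet given by pointwise intersection. $\mathsf{Pop}(\delta)=\bigwedge(\{\delta\}\cup\{\delta':\delta'\lessdot\delta\})$, where $\lessdot$ is the cover relation. *)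

(* Defs.v *)
From mathcomp Require Import all_boot.
Set Implicit Arguments. Unset Strict Implicit. Unset Printing Implicit Defensive.

(* A rooted tree on a finite vertex type V is given by a root r and a parent
   map [par] (with par r = r); every vertex reaches the root by iterating par.
   The planar ordering of children plays no role in the statement. *)
Section Trees.
Variables (V : finType) (r : V) (par : V -> V).

Definition is_rooted_tree : bool :=
  (par r == r) && [forall v, fconnect par v r].

Definition tle (v' v : V) : bool := fconnect par v' v.

Definition is_child (u v : V) : bool := (par u == v) && (u != r).

Definition edge_in (S : {set V}) : rel V :=
  fun x y => [&& x \in S, y \in S & ((par x == y) && (x != r)) || ((par y == x) && (y != r))].

Definition ornament (S : {set V}) : bool :=
  (S != set0) && [forall x in S, forall y in S, connect (edge_in S) x y].

Definition Delta (S : {set V}) (u : V) : {set V} := [set w in S | tle w u].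

Definition ornamentation (d : {ffun V -> {set V}}) : bool :=
  [forall v, ornament (d v)]
  && [forall v, (v \in d v) && [forall w in d v, tle w v]]
  && [forall v, forall v', [|| d v \subset d v', d v' \subset d v
                              | [disjoint d v & d v']]].

Definition orn_le (d d' : {ffun V -> {set V}}) : bool :=
  [forall v, d v \subset d' v].

Definition orn_lt (d d' : {ffun V -> {set V}}) : bool :=
  (d != d') && orn_le d d'.

Definition orn_covered (d' d : {ffun V -> {set V}}) : bool :=
  [&& ornamentation d', ornamentation d, orn_lt d' d &
      ~~ [exists e, [&& ornamentation e, orn_lt d' e & orn_lt e d]]].

(* Pop(d): meet (pointwise intersection) of d and all its lower covers *)
Definition Pop (d : {ffun V -> {set V}}) : {ffun V -> {set V}} :=
  [ffun v => d v :&: \bigcap_(d' | orn_covered d' d) d' v].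

End Trees.

(* Main.v *)
Require Import Defs.
From mathcomp Require Import all_boot.

Lemma iter_fix (V : finType) (par : V -> V) a n : par a = a -> iter n par a = a.
Proof. by move=> h; elim: n => //= n ->. Qed.

Lemma fix_root (V : finType) (r : V) (par : V -> V) a :
  is_rooted_tree r par -> par a = a -> a = r.
Proof.
move=> /andP[_ /forallP H] h; have := iter_findex (H a).
by rewrite iter_fix.
Qed.

Lemma par_r (V : finType) (r : V) (par : V -> V) :
  is_rooted_tree r par -> par r = r.
Proof. by case/andP=> /eqP. Qed.

Lemma iter_mul (V : finType) (par : V -> V) a k m :
  iter k par a = a -> iter (m * k) par a = a.
Proof. by move=> h; elim: m => // m IH; rewrite mulSn iterD IH. Qed.

Lemma antisym (V : finType) (r : V) (par : V -> V) a b :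
  is_rooted_tree r par -> fconnect par a b -> fconnect par b a -> a = b.
Proof.
move=> hT ab ba.
have ei := iter_findex ab; have ej := iter_findex ba.
set i := findex par a b in ei; set j := findex par b a in ej.
have cyc : iter (j + i) par a = a by rewrite iterD ei ej.
case: (posnP (j + i)) => [z|pos].
  have i0 : i = 0 by move/eqP: z; rewrite addn_eq0 => /andP[_ /eqP].
  by rewrite -ei i0.
move: hT => /[dup] hT /andP[/eqP pr /forallP H].
have ek := iter_findex (H a); set k := findex par a r in ek.
have ar : a = r.
  have := @iter_mul _ _ _ _ k.+1 cyc.
  have hle : k <= k.+1 * (j + i) by rewrite mulSn; apply: leq_trans (leq_pmulr k pos) (leq_addl _ _).
  rewrite -(subnK hle) iterD ek iter_fix //.
by rewrite -ei ar iter_fix.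
Qed.

Lemma tot (V : finType) (par : V -> V) x a b :
  fconnect par x a -> fconnect par x b -> fconnect par a b || fconnect par b a.
Proof.
move=> ha hb.
have ei := iter_findex ha; have ej := iter_findex hb.
set i := findex par x a in ei; set j := findex par x b in ej.
case: (leqP i j) => h.
  by rewrite -ej -ei -(subnK h) iterD fconnect_iter.
by rewrite -ej -ei -(subnK (ltnW h)) iterD fconnect_iter orbT.
Qed.

Lemma tle_par (V : finType) (par : V -> V) a x :
  fconnect par a x -> a != x -> fconnect par (par a) x.
Proof.
move=> h; have e := iter_findex h; move: e; case: (findex par a x) => [/= ->|n];
  first by rewrite eqxx.
by rewrite iterSr => <- _; apply: fconnect_iter.
Qed.

Lemma convex_gen (V : finType) (r : V) (par : V -> V) (S : {set V}) x :
  is_rooted_tree r par -> forall p a, fconnect par a x ->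
  path (edge_in r par S) a p -> ~~ fconnect par (last a p) x -> par x \in S.
Proof.
move=> hT; elim=> [|b p IH] a ax /=; first by rewrite ax.
case/andP=> e pth nl.
case bx: (fconnect par b x); first exact: IH bx pth nl.
move: e; rewrite /edge_in => /and3P[aS bS /orP[/andP[/eqP pab ar]|/andP[/eqP pba br]]].
  case: (eqVneq a x) => [<-|nax]; first by rewrite pab.
  by move: (tle_par _ _ _ _ ax nax); rewrite pab bx.
have : fconnect par b x.
  by apply: connect_trans ax; rewrite -pba fconnect1.
by rewrite bx.
Qed.

Lemma convex (V : finType) (r : V) (par : V -> V) (S : {set V}) m x :
  is_rooted_tree r par -> connect (edge_in r par S) x m -> x != m ->
  fconnect par x m -> par x \in S.
Proof.
move=> hT /connectP[p pth lp] xm xle.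
apply: (convex_gen _ _ _ _ _ hT _ _ (connect0 _ x) pth).
rewrite -lp; apply/negP => h; move/eqP: xm; apply; exact: (antisym _ _ _ _ _ hT xle).
Qed.
Theorem lemma2p6 (V : finType) (r : V) (par : V -> V)
  (hT : is_rooted_tree r par) (d : {ffun V -> {set V}})
  (hd : ornamentation r par d) :
  forall v : V,
    Pop r par d v \subset d v /\
    (forall u : V, is_child r par u v -> u \in d v ->
       #|Delta par (Pop r par d v) u| <= #|Delta par (d v) u| - 1).
Proof.
move=> v; split; first by rewrite /Pop ffunE subsetIl.
move=> u /andP[/eqP pu ur] ud.
move: (hd) => /andP[/andP[/forallP horn /forallP htop] /forallP hlam].
have esym : forall S, symmetric (edge_in r par S).
  by move=> S x y; rewrite /edge_in andbCA orbC.
have dvtop : forall w y, y \in d w -> fconnect par y w.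
  by move=> w y yd; have /andP[_ /forallP/(_ y)] := htop w; rewrite yd.
have wdw : forall w, w \in d w by move=> w; case/andP: (htop w).
have dconn : forall w x, x \in d w -> connect (edge_in r par (d w)) x w.
  move=> w x xd; have /andP[_ /forallP/(_ x)] := horn w; rewrite xd.
  by move/forallP/(_ w); rewrite wdw.
set B := Delta par (d v) u.
set S0 := d v :\: B.
have uv : fconnect par u v by rewrite -pu fconnect1.
have vB : v \notin B.
  rewrite inE; apply/nandP; right; apply/negP => vu.
  have e := antisym _ _ _ _ _ hT uv vu.
  move: pu; rewrite -e => /(fix_root _ _ _ _ hT) e2.
  by rewrite e2 eqxx in ur.
have S0sub : S0 \subset d v by apply: subsetDl.
have vS0 : v \in S0 by rewrite inE vB wdw.
have S0conn : forall x, x \in S0 -> connect (edge_in r par S0) x v.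
  move=> x xS; have xv := dvtop v x (subsetP S0sub x xS).
  move: (iter_findex xv); move: (findex par x v) => n.
  elim: n x xS {xv} => [|n IH] x xS /= e; first by rewrite e connect0.
  case: (eqVneq x v) => [->|xnv]; first exact: connect0.
  have xr : x != r.
    apply/eqP => xr; move: e; rewrite xr iter_fix (par_r _ _ _ hT) //.
    by move=> rv; rewrite xr rv eqxx in xnv.
  have xdv : x \in d v := subsetP S0sub x xS.
  have pxd : par x \in d v.
    exact: (convex _ _ _ _ _ _ hT (dconn v x xdv) xnv (dvtop v x xdv)).
  have pxS0 : par x \in S0.
    rewrite inE pxd andbT; apply/negP; rewrite inE => /andP[_ pxu].
    move: xS; rewrite inE inE xdv andbT => /negP; apply.
    exact: connect_trans (fconnect1 _ _) pxu.
  apply: connect_trans (connect1 _) (IH _ pxS0 _); last by rewrite -iterSr.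
  by rewrite /edge_in xS pxS0 eqxx xr.
have S0orn : ornament r par S0.
  rewrite /ornament; apply/andP; split.
    by apply/set0Pn; exists v.
  apply/forallP => x; apply/implyP => xS; apply/forallP => y; apply/implyP => yS.
  apply: connect_trans (S0conn x xS) _.
  by rewrite (sym_connect_sym (@esym S0)) S0conn.
have lamv : forall w, w != v ->
    [|| S0 \subset d w, d w \subset S0 | [disjoint S0 & d w]].
  move=> w wv; have := hlam v; move/forallP/(_ w); case/or3P => h.
  - by rewrite (subset_trans S0sub h).
  - case: (boolP (fconnect par w u)) => wu.
      apply/or3P; apply: Or33; rewrite disjoint_subset; apply/subsetP => x xS; rewrite inE; apply/negP => xw.
      move: xS; rewrite inE inE (subsetP h x xw) andbT => /negP; apply.
      exact: connect_trans (dvtop w x xw) wu.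
    apply/or3P; apply: Or32; apply/subsetP => x xw.
    rewrite inE (subsetP h x xw) andbT; apply/negP; rewrite inE => /andP[_ xu].
    have xw' := dvtop w x xw.
    case/orP: (tot _ _ _ _ _ xw' xu) => [wu'|uw]; first by rewrite wu' in wu.
    have unw : u != w by apply/eqP => e; rewrite -e connect0 in wu.
    have vw : fconnect par v w by rewrite -pu; apply: tle_par.
    have wv' : fconnect par w v := dvtop v w (subsetP h w (wdw w)).
    by rewrite (antisym _ _ _ _ _ hT wv' vw) eqxx in wv.
  - by rewrite (disjointWl S0sub h) !orbT.
set d2 := [ffun w => if w == v then S0 else d w].
have d2o : ornamentation r par d2.
  apply/andP; split; first (apply/andP; split).
  - apply/forallP => w; rewrite ffunE; case: eqP => _ //.
  - apply/forallP => w; rewrite ffunE; case: eqP => [->|_]; last exact: htop.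
    rewrite vS0 /=; apply/forallP => y; apply/implyP => yS.
    exact: dvtop v y (subsetP S0sub y yS).
  - apply/forallP => w; apply/forallP => w'; rewrite !ffunE.
    case: (w =P v) => [ewv|/eqP wv]; case: (w' =P v) => [ew'v|/eqP w'v];
      rewrite ?ewv ?ew'v ?eqxx ?(negbTE wv) ?(negbTE w'v).
    + by rewrite subxx.
    + exact: lamv.
    + move: (lamv w wv); rewrite disjoint_sym.
      by case/or3P => ->; rewrite ?orbT.
    + by move/forallP: (hlam w); apply.
have d2le : orn_le d2 d.
  apply/forallP => w; rewrite ffunE; case: eqP => [->|_]; [exact: S0sub | exact: subxx].
have d2lt : orn_lt d2 d.
  rewrite /orn_lt d2le andbT; apply/eqP => /ffunP /(_ v); rewrite ffunE eqxx => h.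
  have : u \in S0 by rewrite h.
  by rewrite inE inE ud /tle connect0.
pose P e := [&& ornamentation r par e, orn_le d2 e & orn_lt e d].
pose weight (e : {ffun V -> {set V}}) := \sum_w #|e w|.
have Pd2 : P d2 by rewrite /P d2o d2lt /orn_le; apply/and3P; split=> //; apply/forallP => w.
have wlt : forall e f, orn_lt e f -> weight e < weight f.
  move=> e f /andP[nef /forallP le].
  have [w ne] : exists w, e w != f w.
    apply/existsP; apply: contraR nef => /existsPn H; apply/eqP/ffunP => w.
    by apply/eqP; move: (H w); rewrite negbK.
  rewrite /weight (bigD1 w) //= [X in _ < X](bigD1 w) //= -addSn.
  apply: leq_add; first by apply: proper_card; rewrite properEneq ne le.
  by apply: leq_sum => i _; apply: subset_leq_card.
case: (arg_maxnP weight Pd2) => e /and3P[eo d2e ed] emax.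
have ecov : orn_covered r par e d.
  rewrite /orn_covered eo hd ed /=; apply/negP => /existsP [f /and3P[fo ef fd]].
  have Pf : P f.
    rewrite /P fo fd andbT; apply/forallP => w.
    apply: subset_trans (forallP d2e w) _.
    by case/andP: ef => _ /forallP.
  have h1 : weight f <= weight e by exact: (emax f Pf).
  by move: (wlt _ _ ef); rewrite ltnNge h1.
have evd : e v \subset d v by case/andP: ed => _ /forallP.
have evne : e v != d v.
  apply/eqP => evd'; move: (ed) => /andP[/eqP ne /forallP edl]; apply: ne; apply/ffunP => w.
  case: (w =P v) => [->//|/eqP wv].
  apply/eqP; rewrite eqEsubset edl /=.
  by move/forallP: d2e => /(_ w); rewrite ffunE (negbTE wv).
have /properP [_ [x xd xe]] : e v \proper d v by rewrite properEneq evne evd.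
have xB : x \in B.
  case: (boolP (x \in B)) => // xnB; exfalso.
  have xS : x \in S0 by rewrite inE xnB xd.
  have sub : S0 \subset e v by move/forallP: d2e => /(_ v); rewrite ffunE eqxx.
  by rewrite (subsetP sub x xS) in xe.
have Pope : Pop r par d v \subset e v.
  rewrite /Pop ffunE; apply: subset_trans (subsetIr _ _) _.
  exact: (@bigcap_inf _ _ e (fun d' => orn_covered r par d' d) (fun d' => d' v) ecov).
have Popd : Pop r par d v \subset d v by rewrite /Pop ffunE subsetIl.
have : Delta par (Pop r par d v) u \proper B.
  apply/properP; split.
    apply/subsetP => y; rewrite !inE => /andP[yP yu].
    by rewrite (subsetP Popd y yP) yu.
  exists x => //; rewrite inE; apply/nandP; left.
  by apply: contra xe; apply: (subsetP Pope).
move/proper_card => lt.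
by rewrite -(leq_add2r 1) subnK ?addn1 // (leq_ltn_trans _ lt).
Qed.
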